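(* Let $(V,\le,\preccurlyeq)$ be a mixed lattice vector space. Then for all $x,y\in V$, $$ s(x^u-y^u)\le s(x-y). $$
   Context: A mixed lattice vector space $(V,\le,\preccurlyeq)$ is a real vector space $V$ with two partial orderings $\le$ (the initial order) and $\preccurlyeq$ (the specific order), each making $V$ a partially ordered vector space (i.e. $u\le v$ implies $u+w\le v+w$ and $au\le av$ for all $w\in V$, $a\ge 0$; likewise for $\preccurlyeq$), with positive cones $V_p=\{x:0\le x\}$ and $V_{sp}=\{x:0\preccurlyeq x\}$, such that: (1) for all $x,y\in V$ the mixed upper envelope $x\curlyvee y=\min\{w\in V: w\succcurlyeq x \text{ and } w\ge y\}$ and the mixed lower envelope $x\curlywedge y=\max\{w\in V: w\preccurlyeq x \text{ and } w\le y\}$ exist, where the minimum and maximum are taken with respect to $\le$; (2) $x\preccurlyeq y$ implies $x\le y$; (3) $x\curlyvee y$ and $x\curlywedge y$ belong to $V_{sp}$ whenever $x,y\in V_{sp}$. Notation: $x^u=0\curlyvee x$, $x^l=0\curlyvee(-x)$, ${}^ux=x\curlyvee 0$, ${}^lx=(-x)\curlyvee 0$, and the symmetric generalized absolute value $s(x)=x^u+x^l$ (which also equals ${}^ux+{}^lx$). *)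

(* Defs.v *)
From HB Require Import structures.
From mathcomp Require Import all_boot all_order all_algebra.
From mathcomp Require Import reals.
Set Implicit Arguments. Unset Strict Implicit. Unset Printing Implicit Defensive.
Import Order.TTheory GRing.Theory Num.Theory.
Local Open Scope ring_scope.

Definition povs_order (R : realType) (V : lmodType R) (ord : V -> V -> Prop) :=
  [/\ (forall x, ord x x),
      (forall x y, ord x y -> ord y x -> x = y),
      (forall x y z, ord x y -> ord y z -> ord x z),
      (forall u v w, ord u v -> ord (u + w) (v + w)) &
      (forall (a : R) u v, 0 <= a -> ord u v -> ord (a *: u) (a *: v))].

Definition is_mixed_upper (R : realType) (V : lmodType R)
    (le sle : V -> V -> Prop) (x y m : V) :=
  (sle x m /\ le y m) /\ (forall w, sle x w -> le y w -> le m w).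

Definition is_mixed_lower (R : realType) (V : lmodType R)
    (le sle : V -> V -> Prop) (x y m : V) :=
  (sle m x /\ le m y) /\ (forall w, sle w x -> le w y -> le w m).

(* (V, le, sle) is a mixed lattice vector space, and cup / cap are the
   (necessarily unique, by antisymmetry of le) mixed upper / lower envelopes. *)
Definition mixed_lattice_vs (R : realType) (V : lmodType R)
    (le sle : V -> V -> Prop) (cup cap : V -> V -> V) :=
  [/\ povs_order le /\ povs_order sle,
      (forall x y, is_mixed_upper le sle x y (cup x y)),
      (forall x y, is_mixed_lower le sle x y (cap x y)),
      (forall x y, sle x y -> le x y) &
      (forall x y, sle 0 x -> sle 0 y -> sle 0 (cup x y) /\ sle 0 (cap x y))].

Definition upart (R : realType) (V : lmodType R) (cup : V -> V -> V) (x : V) :=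
  cup 0 x.
Definition lpart (R : realType) (V : lmodType R) (cup : V -> V -> V) (x : V) :=
  cup 0 (- x).
Definition sabs (R : realType) (V : lmodType R) (cup : V -> V -> V) (x : V) :=
  upart cup x + lpart cup x.

(* Main.v *)
Require Import Defs.
From HB Require Import structures.
From mathcomp Require Import all_boot all_order all_algebra.
From mathcomp Require Import reals.
Import Order.TTheory GRing.Theory Num.Theory.
Local Open Scope ring_scope.

Section H.
Variables (R : realType) (V : lmodType R) (ord : V -> V -> Prop).
Hypothesis P : povs_order ord.

Lemma oD a b c d : ord a c -> ord b d -> ord (a + b) (c + d).
Proof.
case: P => _ _ tr tl _ h1 h2.
apply: (tr _ (c + b)); first exact: tl.
rewrite (addrC c b) (addrC c d); exact: tl.
Qed.

Lemma osub a p q : ord a (p + q) -> ord (a - q) p.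
Proof.
case: P => _ _ _ tl _ h.
have := tl _ _ (- q) h. by rewrite addrK.
Qed.

Lemma orefl a : ord a a. Proof. by case: P. Qed.
End H.

Theorem lemma2p8 (R : realType) (V : lmodType R)
    (le sle : V -> V -> Prop) (cup cap : V -> V -> V) :
  mixed_lattice_vs le sle cup cap ->
  forall x y : V,
    le (sabs cup (upart cup x - upart cup y)) (sabs cup (x - y)).
Proof.
case=> [[Ple Psle] Hup _ _ _] x y.
rewrite /sabs /upart /lpart.
have U z : sle 0 (cup 0 z) /\ le z (cup 0 z) by case: (Hup 0 z).
have Hmin z w : sle 0 w -> le z w -> le (cup 0 z) w.
  by case: (Hup 0 z) => _ h; apply: h.
have S0 a c : sle 0 a -> sle 0 c -> sle 0 (a + c).
  by move=> ha hc; rewrite -(addr0 0); exact: oD.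
apply: oD => //; apply: (Hmin).
- exact: (proj1 (U _)).
- apply: osub => //; apply: (Hmin).
  + exact: (S0 _ _ (proj1 (U _)) (proj1 (U _))).
  + have := @oD _ _ _ Ple _ _ _ _ (proj2 (U (x - y))) (proj2 (U y)).
    by rewrite subrK.
- exact: (proj1 (U _)).
- rewrite opprB. apply: osub => //; apply: (Hmin).
  + exact: (S0 _ _ (proj1 (U _)) (proj1 (U _))).
  + have := @oD _ _ _ Ple _ _ _ _ (proj2 (U (- (x - y)))) (proj2 (U x)).
    by rewrite opprB subrK.
Qed.
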